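(* Let $m\geq n\geq 2$. If $S$ is a $\{2\}$-resolving set of $K_m\Box K_n$, and $q$ and $r$ are integers such that $|S|=qm+r$ with $0\leq r<m$, then $$r\binom{n-(q+1)}{2}+(m-r)\binom{n-q}{2}\leq\binom{n}{2}.$$
   Context: $K_m\Box K_n$ has vertices $av$ with $a\in V(K_m)$, $v\in V(K_n)$; distinct $av,bu$ are adjacent iff $a=b$ or $u=v$. $d$ is the shortest-path distance, $d(s,X)=\min_{x\in X}d(s,x)$, $\mathcal{D}_S(X)=(d(s_1,X),\dots,d(s_k,X))$ for $S=\{s_1,\dots,s_k\}$. $S$ is a $\{2\}$-resolving set if $\mathcal{D}_S(X)\neq\mathcal{D}_S(Y)$ for all distinct nonempty vertex sets $X,Y$ with $|X|,|Y|\leq 2$. Binomial coefficients $\binom{a}{2}$ are taken as $a(a-1)/2$ for integers $a$ (in particular $0$ for $a\in\{0,1\}$). *)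

(* Defs.v *)
From mathcomp Require Import all_boot all_order all_algebra.
Set Implicit Arguments. Unset Strict Implicit. Unset Printing Implicit Defensive.
Import Order.TTheory GRing.Theory Num.Theory.

(* Vertices of K_m □ K_n : pairs (a, v) with a : 'I_m, v : 'I_n. *)
Definition rook_vertex (m n : nat) : finType := ('I_m * 'I_n)%type.

Definition rook_adj (m n : nat) : rel (rook_vertex m n) :=
  fun x y => (x != y) && ((x.1 == y.1) || (x.2 == y.2)).

Fixpoint rook_ball (m n : nat) (k : nat) (x : rook_vertex m n)
  : {set rook_vertex m n} :=
  match k with
  | 0 => [set x]
  | k'.+1 => rook_ball k' x :|:
             [set y | [exists z in rook_ball k' x, rook_adj z y]]
  end.

(* shortest-path distance: least k with y in ball k x (the graph is
   connected for m, n >= 1, so k <= #|V| suffices; default #|V|) *)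
Definition rook_dist (m n : nat) (x y : rook_vertex m n) : nat :=
  head #|rook_vertex m n|
    [seq k <- iota 0 #|rook_vertex m n|.+1 | y \in rook_ball k x].

Definition rook_dist_set (m n : nat) (s : rook_vertex m n)
  (X : {set rook_vertex m n}) : nat :=
  \big[minn/#|rook_vertex m n|]_(x in X) rook_dist s x.

Definition two_resolving (m n : nat) (S : {set rook_vertex m n}) : Prop :=
  forall X Y : {set rook_vertex m n},
    X != set0 -> Y != set0 -> #|X| <= 2 -> #|Y| <= 2 -> X != Y ->
    exists2 s, s \in S & rook_dist_set s X != rook_dist_set s Y.

Definition binom2z (a : int) : int := ((a * (a - 1)) %/ 2)%Z.

(* Main.v *)
Require Import Defs.
From HB Require Import structures.
From mathcomp Require Import all_boot all_order all_algebra all_fingroup zify ring lra.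
Import Order.TTheory GRing.Theory Num.Theory.

HB.instance Definition _ := SemiGroup.isComLaw.Build nat minn minnA minnC.

Section Auto.
Variables (m n : nat) (f : 'I_m -> 'I_m) (g : 'I_n -> 'I_n).
Hypotheses (finj : injective f) (ginj : injective g).
Definition rsig (x : rook_vertex m n) : rook_vertex m n := (f x.1, g x.2).
Lemma sig_inj : injective rsig.
Proof. move=> [x1 x2] [y1 y2] [/finj -> /ginj ->]. by []. Qed.
Lemma sig_adj x y : rook_adj (rsig x) (rsig y) = rook_adj x y.
Proof. by rewrite /rook_adj (inj_eq sig_inj) /= (inj_eq finj) (inj_eq ginj). Qed.
Lemma ball_sig k x : rook_ball k (rsig x) = rsig @: rook_ball k x.
Proof.
elim: k => [|k IH] /=; first by rewrite imset_set1.
rewrite imsetU IH; congr (_ :|: _).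
apply/setP => y; rewrite -(f_invF sig_inj y) (mem_imset _ _ sig_inj) !inE.
apply/existsP/existsP => [[z /andP [Hz Ha]] | [z /andP [Hz Ha]]].
  move/imsetP: Hz => [z' Hz' Ez]; subst z.
  exists z'; rewrite Hz' /=; by rewrite sig_adj in Ha.
exists (rsig z); rewrite (mem_imset _ _ sig_inj) Hz /= sig_adj //.
Qed.
Lemma dist_sig x y : rook_dist (rsig x) (rsig y) = rook_dist x y.
Proof.
rewrite /rook_dist; congr head; apply: eq_filter => k.
by rewrite ball_sig (mem_imset _ _ sig_inj).
Qed.
Lemma distset_sig s (X : {set rook_vertex m n}) : rook_dist_set (rsig s) (rsig @: X) = rook_dist_set s X.
Proof.
rewrite /rook_dist_set (reindex_inj sig_inj) /=.
by apply: eq_big => x; rewrite ?(mem_imset _ _ sig_inj) ?dist_sig.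
Qed.
End Auto.
Arguments rsig {m n}.

Lemma key m n (S : {set rook_vertex m n}) (HS : two_resolving S) a b u v :
  a != b -> u != v -> (a,u) \notin S -> (a,v) \notin S -> (b,u) \notin S ->
  (b,v) \notin S -> False.
Proof.
move=> ab uv au av bu bv.
set X : {set rook_vertex m n} := [set (a,u); (b,v)].
set Y : {set rook_vertex m n} := [set (a,v); (b,u)].
have [s sS Hne] : exists2 s, s \in S & rook_dist_set s X != rook_dist_set s Y.
  apply: HS.
  - by apply/set0Pn; exists (a,u); rewrite !inE eqxx.
  - by apply/set0Pn; exists (a,v); rewrite !inE eqxx.
  - by rewrite cards2; case: (_ != _).
  - by rewrite cards2; case: (_ != _).
  - apply/negP => /eqP EXY.
    have : (a,u) \in Y by rewrite -EXY !inE eqxx.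
    by rewrite !inE !xpair_eqE eqxx (negbTE uv) (negbTE ab).
move: sS Hne; case: s => s1 s2 sS Hne.
case: (boolP ((s1 == a) || (s1 == b))) => Hrow.
  have s2u : s2 != u.
    apply/negP => /eqP E; subst s2.
    by case/orP: Hrow => /eqP E; subst s1; [rewrite sS in au | rewrite sS in bu].
  have s2v : s2 != v.
    apply/negP => /eqP E; subst s2.
    by case/orP: Hrow => /eqP E; subst s1; [rewrite sS in av | rewrite sS in bv].
  have fi : injective (@id 'I_m) by [].
  have gi : injective (tperm u v) by apply: perm_inj.
  have Es : rsig id (tperm u v) (s1, s2) = (s1, s2).
    by rewrite /rsig /= tpermD // eq_sym.
  have EX : rsig id (tperm u v) @: X = Y.
    by rewrite /X imsetU !imset_set1 /rsig /= tpermL tpermR.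
  by move: Hne; have := @distset_sig _ _ _ _ fi gi (s1, s2) X; rewrite Es EX => ->; rewrite eqxx.
have s1a : s1 != a by apply: contraNneq Hrow => ->; rewrite eqxx.
have s1b : s1 != b by apply: contraNneq Hrow => ->; rewrite eqxx orbT.
have fi : injective (tperm a b) by apply: perm_inj.
have gi : injective (@id 'I_n) by [].
have Es : rsig (tperm a b) id (s1, s2) = (s1, s2).
  by rewrite /rsig /= tpermD // eq_sym.
have EX : rsig (tperm a b) id @: X = Y.
  by rewrite /X imsetU !imset_set1 /rsig /= tpermL tpermR setUC.
by move: Hne; have := @distset_sig _ _ _ _ fi gi (s1, s2) X; rewrite Es EX => ->; rewrite eqxx.
Qed.


Definition rc {m n} (S : {set rook_vertex m n}) (a : 'I_m) := #|[set v | (a, v) \in S]|.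

Lemma rc_le m n (S : {set rook_vertex m n}) a : rc S a <= n.
Proof. by apply: leq_trans (max_card _) _; rewrite card_ord. Qed.

Lemma rc_sum m n (S : {set rook_vertex m n}) : \sum_a rc S a = #|S|.
Proof.
transitivity (\sum_a \sum_v (if (a, v) \in S then 1 else 0)).
  apply: eq_bigr => a _; rewrite /rc -sum1_card big_mkcond /=.
  by apply: eq_bigr => v _; rewrite inE.
rewrite pair_big /= -sum1_card [RHS]big_mkcond /=.
by apply: eq_bigr => -[a v]. Qed.

Lemma count_bound m n (S : {set rook_vertex m n}) (HS : two_resolving S) :
  \sum_a 'C(n - rc S a, 2) <= 'C(n, 2).
Proof.
pose fr a := [set v | (a, v) \notin S].
pose F a := [set B : {set 'I_n} | B \subset fr a & #|B| == 2].
have cF a : #|F a| = 'C(n - rc S a, 2).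
  rewrite cards_draws; congr 'C(_, _).
  have : #|[set v | (a, v) \in S]| + #|~: [set v | (a, v) \in S]| = n.
    by rewrite cardsC card_ord.
  have -> : ~: [set v | (a, v) \in S] = fr a by apply/setP => v; rewrite !inE.
  by rewrite /rc; move: #|[set v | _]| #|fr a| => c k; lia.
have disjF : forall i j, i != j -> [disjoint F i & F j].
  move=> i j ij; apply/pred0P => B /=; apply/negP => /andP[].
  rewrite !inE => /andP[H1 /cards2P[u [v [uv EB]]]] /andP[H2 _]; subst B.
  have iu := subsetP H1 u (set21 _ _); have iv := subsetP H1 v (set22 _ _).
  have ju := subsetP H2 u (set21 _ _); have jv := subsetP H2 v (set22 _ _).
  rewrite !inE in iu iv ju jv.
  exact: (@key _ _ _ HS _ _ _ _ ij uv iu iv ju jv).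
have := @partition_disjoint_bigcup _ _ nat 0 addn F (fun _ => 1) disjF.
rewrite sum1_card => E.
rewrite -(eq_bigr _ (fun a _ => cF a)).
under eq_bigr do rewrite -sum1_card.
rewrite -E; apply: leq_trans (subset_leq_card (_ : _ \subset [set B : {set 'I_n} | #|B| == 2])) _; last by rewrite card_draws card_ord.
apply/subsetP => B /bigcupP [a _]; rewrite !inE => /andP[_ ->] //.
Qed.

Local Open Scope ring_scope.

Lemma binz2 (a : int) : binom2z a * 2 = a * (a - 1).
Proof. rewrite /binom2z.
have [t [e [-> He]]] : exists t e : int, a = 2 * t + e /\ (e = 0 \/ e = 1).
  exists (a %/ 2)%Z, (a %% 2)%Z. split. lia. lia.
case: He => ->.
  have -> : (2 * t + 0) * (2 * t + 0 - 1) = (t * (2 * t - 1)) * 2 by ring.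
  by rewrite mulzK.
have -> : (2 * t + 1) * (2 * t + 1 - 1) = (t * (2 * t + 1)) * 2 by ring.
by rewrite mulzK.
Qed.
Lemma binC (k : nat) : ('C(k, 2) * 2 = k * (k - 1))%N.
Proof. elim: k => [|k IH] //. rewrite binS bin1. nia. Qed.

Lemma conv (n c q : int) :
  (n - q) * (n - q - 1) + (c - q) * ((n - (q + 1)) * (n - (q + 1) - 1) - (n - q) * (n - q - 1))
  <= (n - c) * (n - c - 1).
Proof.
have E : (n - c) * (n - c - 1) - ((n - q) * (n - q - 1) + (c - q) * ((n - (q + 1)) * (n - (q + 1) - 1) - (n - q) * (n - q - 1))) = (q - c) * (q - c + 1) by ring.
rewrite -subr_ge0 E; move: (q - c) => t; nia.
Qed.

Theorem mainTheorem13 (m n : nat) (S : {set rook_vertex m n}) (q r : int) :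
  (2 <= n)%N -> (n <= m)%N ->
  two_resolving S ->
  (#|S|%:Z = q * m%:Z + r) -> 0 <= r -> r < m%:Z ->
  r * binom2z (n%:Z - (q + 1)) + (m%:Z - r) * binom2z (n%:Z - q)
    <= binom2z n%:Z.
Proof.
move=> n2 nm HS ES r0 rm.
rewrite -(ler_pM2r (_ : 0 < 2)) // mulrDl -!mulrA !binz2.
pose G (x : int) := x * (x - 1).
set A := G (n%:Z - q); set B := G (n%:Z - (q + 1)) - A.
have up : \sum_(a < m) G (n%:Z - (rc S a)%:Z) <= G n%:Z.
  have -> : \sum_(a < m) G (n%:Z - (rc S a)%:Z) = ((\sum_(a < m) 'C(n - rc S a, 2)) * 2)%N%:Z.
    rewrite PoszM (big_morph Posz PoszD (erefl (Posz 0))) big_distrl /=; apply: eq_bigr => a _.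
    have := rc_le _ _ S a; move: (rc S a) => c hc.
    rewrite /G.
    have -> : n%:Z - c%:Z = (n - c)%N%:Z by lia.
    have := binC (n - c); move: (n - c)%N => k; nia.
  have := @count_bound _ _ _ HS; rewrite /G => h.
  have : ((\sum_(a < m) 'C(n - rc S a, 2)) * 2 <= 'C(n, 2) * 2)%N by rewrite leq_mul2r h orbT.
  rewrite binC; move: (\sum_(a < m) 'C(n - rc S a, 2))%N => s; nia.
have low : \sum_(a < m) (A + ((rc S a)%:Z - q) * B) <= \sum_(a < m) G (n%:Z - (rc S a)%:Z).
  by apply: ler_sum => a _; apply: conv.
have E : \sum_(a < m) (A + ((rc S a)%:Z - q) * B) = m%:Z * A + r * B.
  rewrite big_split /= sumr_const card_ord -big_distrl /= sumrB sumr_const card_ord.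
  have Hs : \sum_(i < m) (rc S i)%:Z = (#|S|)%:Z by rewrite -rc_sum (big_morph Posz PoszD (erefl (Posz 0))).
  rewrite Hs ES; ring.
apply: le_trans up; move: low; rewrite E /B /A /G => h; apply: le_trans h.
rewrite le_eqVlt; apply/orP; left; apply/eqP; ring.
Qed.
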